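(* For any $k$-algebra $A$, the map $\mathrm{Irr}(A)\to\mathrm{Irr}(A_{\mathbb{C}})$, $V\mapsto V_{\mathbb{C}}$, is a bijection.
   Context: $k=\mathcal{O}(X)$ is the coordinate algebra of a complex affine variety $X$. A $k$-algebra is a (not necessarily unital or commutative) $\mathbb{C}$-algebra $A$ which is a unital left $k$-module with $\lambda(\omega a)=\omega(\lambda a)=(\lambda\omega)a$ and $\omega(a_1a_2)=(\omega a_1)a_2=a_1(\omega a_2)$. An $A$-module is a complex vector space $V$ with algebra morphisms $A\to\mathrm{Hom}_{\mathbb{C}}(V,V)$ and a unital $k\to\mathrm{Hom}_{\mathbb{C}}(V,V)$ with $(\omega a)v=\omega(av)=a(\omega v)$; irreducible means $AV\neq 0$ and no subspace $0\neq W\neq V$ stable under $A$ and $k$; two $A$-modules are equivalent if there is a linear isomorphism intertwining both the $A$- and $k$-actions. $\mathrm{Irr}(A)$ is the set of equivalence classes of irreducible $A$-modules. $A_{\mathbb{C}}$ is $A$ with the $k$-action forgotten; irreducibility and equivalence of $A_{\mathbb{C}}$-modules are defined the same way using only the action of $A_{\mathbb{C}}$, and $\mathrm{Irr}(A_{\mathbb{C}})$ is the set of equivalence classes of irreducible $A_{\mathbb{C}}$-modules. $V_{\mathbb{C}}$ is the $A$-module $V$ with the $k$-action forgotten. *)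

(* Defs.v *)
From HB Require Import structures.
From mathcomp Require Import all_boot all_order all_algebra.
From mathcomp Require Import reals complex.
Set Implicit Arguments. Unset Strict Implicit. Unset Printing Implicit Defensive.
Import Order.TTheory GRing.Theory Num.Theory.
Local Open Scope ring_scope.

(* The complex numbers: R[i] for R : realType (any realType is the field of
   real numbers up to unique isomorphism). *)
Notation CC R := (R[i])%type.

Section KAlgebras.
Variable F : fieldType.

Inductive in_subalg (k : comAlgType F) (s : seq k) : k -> Prop :=
| sa_gen x : x \in s -> in_subalg s x
| sa_one : in_subalg s 1
| sa_add x y : in_subalg s x -> in_subalg s y -> in_subalg s (x + y)
| sa_mul x y : in_subalg s x -> in_subalg s y -> in_subalg s (x * y)
| sa_scale (c : F) x : in_subalg s x -> in_subalg s (c *: x).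

Definition fin_gen_alg (k : comAlgType F) : Prop :=
  exists s : seq k, forall x : k, in_subalg s x.

Definition reduced_alg (k : comAlgType F) : Prop :=
  forall (x : k) (n : nat), x ^+ n = 0 -> x = 0.

(* k is (isomorphic to) the coordinate algebra O(X) of a complex affine variety X
   iff k is a finitely generated, reduced, commutative unital F-algebra. *)
Definition coordinate_algebra (k : comAlgType F) : Prop :=
  fin_gen_alg k /\ reduced_alg k.

Definition nu_algebra (A : lmodType F) (mul : A -> A -> A) : Prop :=
  [/\ forall a b c, mul a (mul b c) = mul (mul a b) c,
      forall (l : F) a b c, mul (l *: a + b) c = l *: mul a c + mul b c
    & forall (l : F) a b c, mul a (l *: b + c) = l *: mul a b + mul a c].

Definition k_algebra (k : comAlgType F) (A : lmodType F) (mul : A -> A -> A)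
    (kact : k -> A -> A) : Prop :=
  [/\ nu_algebra mul,
      [/\ forall a, kact 1 a = a,
          forall w1 w2 a, kact (w1 * w2) a = kact w1 (kact w2 a),
          forall w1 w2 a, kact (w1 + w2) a = kact w1 a + kact w2 a
        & forall w a1 a2, kact w (a1 + a2) = kact w a1 + kact w a2],
      forall (l : F) w a, l *: kact w a = kact w (l *: a)
                       /\ kact w (l *: a) = kact (l *: w) a
    & forall w a1 a2, kact w (mul a1 a2) = mul (kact w a1) a2
                   /\ mul (kact w a1) a2 = mul a1 (kact w a2)].

Definition AC_module (A : lmodType F) (mul : A -> A -> A)
    (V : lmodType F) (rho : A -> V -> V) : Prop :=
  [/\ forall a (l : F) v1 v2, rho a (l *: v1 + v2) = l *: rho a v1 + rho a v2,
      forall (l : F) a1 a2 v, rho (l *: a1 + a2) v = l *: rho a1 v + rho a2 v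
    & forall a1 a2 v, rho (mul a1 a2) v = rho a1 (rho a2 v)].

Definition A_module (k : comAlgType F) (A : lmodType F) (mul : A -> A -> A)
    (kact : k -> A -> A) (V : lmodType F) (rho : A -> V -> V)
    (kappa : k -> V -> V) : Prop :=
  [/\ AC_module mul rho,
      [/\ forall w (l : F) v1 v2, kappa w (l *: v1 + v2) = l *: kappa w v1 + kappa w v2,
          forall (l : F) w1 w2 v, kappa (l *: w1 + w2) v = l *: kappa w1 v + kappa w2 v,
          forall w1 w2 v, kappa (w1 * w2) v = kappa w1 (kappa w2 v)
        & forall v, kappa 1 v = v]
    & forall w a v, rho (kact w a) v = kappa w (rho a v)
                 /\ kappa w (rho a v) = rho a (kappa w v)].

Definition subspace (V : lmodType F) (W : V -> Prop) : Prop :=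
  [/\ W 0, forall v1 v2, W v1 -> W v2 -> W (v1 + v2)
    & forall (l : F) v, W v -> W (l *: v)].

Definition proper_nonzero (V : lmodType F) (W : V -> Prop) : Prop :=
  (exists v, W v /\ v <> 0) /\ (exists v, ~ W v).

Definition AC_irreducible (A : lmodType F) (V : lmodType F) (rho : A -> V -> V) : Prop :=
  (exists a v, rho a v <> 0) /\
  ~ (exists W : V -> Prop, subspace W /\ proper_nonzero W /\
        forall a v, W v -> W (rho a v)).

Definition A_irreducible (k : comAlgType F) (A : lmodType F) (V : lmodType F)
    (rho : A -> V -> V) (kappa : k -> V -> V) : Prop :=
  (exists a v, rho a v <> 0) /\
  ~ (exists W : V -> Prop, subspace W /\ proper_nonzero W /\
        (forall a v, W v -> W (rho a v)) /\ (forall w v, W v -> W (kappa w v))).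

Definition lin_iso (V W : lmodType F) (f : V -> W) : Prop :=
  (forall (l : F) v1 v2, f (l *: v1 + v2) = l *: f v1 + f v2) /\ bijective f.

Definition AC_equiv (A : lmodType F) (V W : lmodType F)
    (rhoV : A -> V -> V) (rhoW : A -> W -> W) : Prop :=
  exists f : V -> W, lin_iso f /\ forall a v, f (rhoV a v) = rhoW a (f v).

Definition A_equiv (k : comAlgType F) (A : lmodType F) (V W : lmodType F)
    (rhoV : A -> V -> V) (kappaV : k -> V -> V)
    (rhoW : A -> W -> W) (kappaW : k -> W -> W) : Prop :=
  exists f : V -> W, lin_iso f /\ (forall a v, f (rhoV a v) = rhoW a (f v))
                               /\ (forall w v, f (kappaV w v) = kappaW w (f v)).

End KAlgebras.

(* Main.v *)
Require Import Defs.
From HB Require Import structures.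
From mathcomp Require Import all_boot all_order all_algebra.
From mathcomp Require Import reals complex.
From Stdlib Require Import Classical ClassicalEpsilon.
Set Implicit Arguments. Unset Strict Implicit.
Import GRing.Theory.
Local Open Scope ring_scope.

Section Lin.
Variable F : fieldType.
Variables (V W : lmodType F) (g : V -> W).
Hypothesis gl : forall (l : F) x y, g (l *: x + y) = l *: g x + g y.
Lemma lin0 : g 0 = 0.
Proof.
have H := gl 1 0 0; rewrite !scale1r addr0 in H.
apply: (@addrI _ (g 0)); by rewrite addr0 -H.
Qed.
Lemma linD x y : g (x + y) = g x + g y.
Proof. by have := gl 1 x y; rewrite !scale1r. Qed.
Lemma linZ (l : F) x : g (l *: x) = l *: g x.
Proof. by have := gl l x 0; rewrite !addr0 lin0 addr0. Qed.
Lemma linB x y : g (x - y) = g x - g y.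
Proof. by have := gl (-1) y x; rewrite !scaleN1r addrC [_ + g x]addrC. Qed.
End Lin.

Section Main.
Variables (F : fieldType) (k : comAlgType F) (A : lmodType F)
  (mul : A -> A -> A) (kact : k -> A -> A).

Lemma irr_dich (V : lmodType F) (rho : A -> V -> V) (kappa : k -> V -> V)
  (T : V -> Prop) :
  A_irreducible rho kappa -> subspace T -> (forall a v, T v -> T (rho a v)) ->
  (forall w v, T v -> T (kappa w v)) ->
  (forall v, T v -> v = 0) \/ (forall v, T v).
Proof.
move=> [_ Hn] ST HA Hk.
case: (classic (exists v, T v /\ v <> 0)) => [Hnz|Hz]; last first.
  left => v Tv; apply: NNPP => nv; apply: Hz; by exists v.
right => v; apply: NNPP => nTv; apply: Hn; exists T; split => //; split => //.
by split => //; exists v.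
Qed.

Lemma AC_A_irr (V : lmodType F) (rho : A -> V -> V) (kappa : k -> V -> V) :
  AC_irreducible rho -> A_irreducible rho kappa.
Proof. move=> [H1 H2]; split => // [[W [S [P [Ha _]]]]]; apply: H2; by exists W. Qed.

Lemma ann0 (V : lmodType F) (rho : A -> V -> V) (kappa : k -> V -> V) :
  AC_module mul rho -> A_irreducible rho kappa ->
  (forall w z, (forall b, rho b z = 0) -> forall b, rho b (kappa w z) = 0) ->
  forall z : V, (forall b, rho b z = 0) -> z = 0.
Proof.
move=> [Hrl Hra Hrm] HI Hk z Hz.
have := @irr_dich V rho kappa (fun z => forall b, rho b z = 0) HI.
case.
- split.
  + by move=> b; apply: lin0; apply: Hrl.
  + by move=> v1 v2 H1 H2 b; rewrite (linD (Hrl b)) H1 H2 addr0.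
  + by move=> l v H1 b; rewrite (linZ (Hrl b)) H1 scaler0.
- by move=> a v H b; rewrite -Hrm H.
- exact: Hk.
- by move=> H; apply: H.
- move=> H; exfalso; case: HI => [[a [v Hav]] _]; apply: Hav; exact: H.
Qed.

Lemma uniqv (V : lmodType F) (rho : A -> V -> V) (kappa : k -> V -> V) :
  AC_module mul rho -> A_irreducible rho kappa ->
  (forall w z, (forall b, rho b z = 0) -> forall b, rho b (kappa w z) = 0) ->
  forall x y : V, (forall b, rho b x = rho b y) -> x = y.
Proof.
move=> HM HI Hk x y H; apply/eqP; rewrite -subr_eq0; apply/eqP.
apply: (ann0 HM HI Hk) => b; case: HM => Hrl _ _.
by rewrite (linB (Hrl b)) H subrr.
Qed.

End Main.

Theorem corollary3p4 (R : realType) (k : comAlgType (CC R))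
    (A : lmodType (CC R)) (mul : A -> A -> A) (kact : k -> A -> A) :
  coordinate_algebra k ->
  k_algebra mul kact ->
  (* (1a) V irreducible A-module ==> V_C irreducible A_C-module *)
  (forall (V : lmodType (CC R)) (rho : A -> V -> V) (kappa : k -> V -> V),
      A_module mul kact rho kappa -> A_irreducible rho kappa ->
      AC_irreducible rho)
  /\
  (* (1b) equivalent A-modules have equivalent underlying A_C-modules *)
  (forall (V W : lmodType (CC R)) (rhoV : A -> V -> V) (kappaV : k -> V -> V)
          (rhoW : A -> W -> W) (kappaW : k -> W -> W),
      A_module mul kact rhoV kappaV -> A_module mul kact rhoW kappaW ->
      A_equiv rhoV kappaV rhoW kappaW -> AC_equiv rhoV rhoW)
  /\
  (* (2) injectivity *)
  (forall (V W : lmodType (CC R)) (rhoV : A -> V -> V) (kappaV : k -> V -> V)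
          (rhoW : A -> W -> W) (kappaW : k -> W -> W),
      A_module mul kact rhoV kappaV -> A_irreducible rhoV kappaV ->
      A_module mul kact rhoW kappaW -> A_irreducible rhoW kappaW ->
      AC_equiv rhoV rhoW -> A_equiv rhoV kappaV rhoW kappaW)
  /\
  (* (3) surjectivity *)
  (forall (U : lmodType (CC R)) (rhoU : A -> U -> U),
      AC_module mul rhoU -> AC_irreducible rhoU ->
      exists (V : lmodType (CC R)) (rho : A -> V -> V) (kappa : k -> V -> V),
        [/\ A_module mul kact rho kappa, A_irreducible rho kappa
          & AC_equiv rho rhoU]).
Proof.
move=> _ [Hnu [Hk1 Hkm Hkd Hka] Hsc Hmul].
split; [|split; [|split]].
- move=> V rho kappa [[Hrl Hra Hrm] [Hkl Hkl2 Hkm' Hk1'] Hrk] HI.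
  have HM : AC_module mul rho by [].
  split; first by case: HI.
  move=> [W [[W0 WD WZ] [[[w [Ww wn0]] [v nWv]] HAW]]].
  pose T := fun v => W v /\ forall w, W (kappa w v).
  have := @irr_dich _ _ _ _ _ _ T HI.
  case.
  + split.
    * by split => // w'; rewrite (lin0 (Hkl w')).
    * move=> v1 v2 [H1 H1'] [H2 H2']; split; first exact: WD.
      by move=> w'; rewrite (linD (Hkl w')); apply: WD.
    * move=> l v1 [H1 H1']; split; first exact: WZ.
      by move=> w'; rewrite (linZ (Hkl w')); apply: WZ.
  + move=> a v1 [H1 H1']; split; first exact: HAW.
    by move=> w'; rewrite -(Hrk w' a v1).1; apply: HAW.
  + move=> w1 v1 [H1 H1']; split => // w'; by rewrite -Hkm'.
  + move=> H; apply: wn0; apply: (ann0 HM HI).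
      move=> w1 z Hz b; rewrite -(Hrk w1 b z).2 Hz; exact: (lin0 (Hkl w1)).
    move=> b; apply: H; split; first exact: HAW.
    by move=> w'; rewrite -(Hrk w' b w).1; apply: HAW.
  + by move=> H; apply: nWv; case: (H v).
- move=> V W rhoV kappaV rhoW kappaW _ _ [f [Hf [H1 _]]]; by exists f.
- move=> V W rhoV kappaV rhoW kappaW [[Hrl Hra Hrm] [Hkl Hkl2 Hkm' Hk1'] Hrk] HIV
    [[Hrl' Hra' Hrm'] [Hkl' Hkl2' Hkm'' Hk1''] Hrk'] HIW [f [[Hfl Hfb] Hfr]].
  exists f; split; first by [].
  split; first by [].
  pose T := fun v => forall w, f (kappaV w v) = kappaW w (f v).
  have HT : forall a v, T (rhoV a v).
    move=> a v w; rewrite -(Hrk w a v).1 Hfr Hfr; exact: (Hrk' w a (f v)).1.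
  have := @irr_dich _ _ _ _ _ _ T HIV.
  case.
  + split.
    * by move=> w; rewrite (lin0 (Hkl w)) (lin0 Hfl) (lin0 (Hkl' w)).
    * move=> v1 v2 H1 H2 w.
      by rewrite (linD (Hkl w)) (linD Hfl) H1 H2 (linD Hfl) (linD (Hkl' w)).
    * move=> l v1 H1 w.
      by rewrite (linZ (Hkl w)) (linZ Hfl) H1 (linZ Hfl) (linZ (Hkl' w)).
  + by move=> a v _; apply: HT.
  + move=> w1 v1 H1 w; by rewrite -Hkm' H1 H1 Hkm''.
  + move=> H; exfalso; case: HIV => [[a [v Hav]] _]; apply: Hav; apply: H; exact: HT.
  + by move=> H w v; apply: H.
- move=> U rhoU HM HI.
  pose triv := fun (_ : k) (v : U) => v.
  have HI' : A_irreducible rhoU triv by apply: AC_A_irr.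
  have Hktriv : forall w z, (forall b, rhoU b z = 0) -> forall b, rhoU b (triv w z) = 0 by [].
  have Hu := uniqv HM HI' Hktriv.
  case: (HM) => Hrl Hra Hrm.
  have Hex : forall w u, exists v, forall b, rhoU b v = rhoU (kact w b) u.
    move=> w.
    have := @irr_dich _ _ _ _ _ _ (fun u => exists v, forall b, rhoU b v = rhoU (kact w b) u) HI'.
    case.
    + split.
      * by exists 0 => b; rewrite (lin0 (Hrl b)) (lin0 (Hrl _)).
      * move=> v1 v2 [x1 H1] [x2 H2]; exists (x1 + x2) => b.
        by rewrite (linD (Hrl b)) (linD (Hrl _)) H1 H2.
      * move=> l v1 [x1 H1]; exists (l *: x1) => b.
        by rewrite (linZ (Hrl b)) (linZ (Hrl _)) H1.
    + move=> a v _; exists (rhoU (kact w a) v) => b.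
      by rewrite -!Hrm (Hmul w b a).2.
    + by [].
    + move=> H; exfalso; case: HI => [[a [v Hav]] _]; apply: Hav; apply: H.
      exists (rhoU (kact w a) v) => b.
      by rewrite -!Hrm (Hmul w b a).2.
    + by [].
  pose kappa := fun w u => proj1_sig (constructive_indefinite_description _ (Hex w u)).
  have kP : forall w u b, rhoU b (kappa w u) = rhoU (kact w b) u.
    move=> w u; exact: (proj2_sig (constructive_indefinite_description _ (Hex w u))).
  have HAM : A_module mul kact rhoU kappa.
    split => //.
    + split.
      * move=> w l v1 v2; apply: Hu => b.
        by rewrite kP Hrl Hrl !kP.
      * move=> l w1 w2 v; apply: Hu => b.
        rewrite kP Hrl !kP -Hra; congr (rhoU _ v).
        by rewrite Hkd -(Hsc l w1 b).2 -(Hsc l w1 b).1.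
      * move=> w1 w2 v; apply: Hu => b.
        by rewrite !kP -Hkm (mulrC w2 w1).
      * by move=> v; apply: Hu => b; rewrite kP Hk1.
    + move=> w a v; split; apply: Hu => b.
      * by rewrite -Hrm kP -Hrm (Hmul w b a).2.
      * by rewrite kP -!Hrm kP (Hmul w b a).1.
  exists U, rhoU, kappa; split => //.
  + case: HI => H1 H2; split => // [[W [S [P [Ha _]]]]]; apply: H2; by exists W.
  + exists id; split => //; split => //; exact: (Bijective (g := id)).
Qed.
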